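(* Let $H=\Bbbk^G{}^\tau\#_\sigma\Bbbk F$ be as in the context and fix $f\in F$. The assignment $V\mapsto\tilde V=(V\otimes\Bbbk f)\Box_{H'_f}H$ is the object map of an equivalence of categories from the category of right $\Bbbk^{G_f}_{\tau_f}$-comodules to the category of right $C_f$-comodules, where $C_f=\mathrm{span}\{p_g\#(g'\triangleright f)\mid g,g'\in G\}$. This equivalence induces an isomorphism between the Grothendieck groups $\mathrm{Gr}(\Bbbk^{G_f}_{\tau_f}\text{-Comod})$ and $\mathrm{Gr}(C_f\text{-Comod})$.
   Context: Standing setup: $\Bbbk$ is an algebraically closed field of characteristic $0$, $F$ a group (possibly infinite), $G$ a finite group, and $(F,G,\triangleleft,\triangleright)$ a matched pair: $\triangleright:G\times F\to F$ a left action of $G$ on the set $F$, $\triangleleft:G\times F\to G$ a right action of $F$ on the set $G$, with $g\triangleright(ff')=(g\triangleright f)((g\triangleleft f)\triangleright f')$ and $(gg')\triangleleft f=(g\triangleleft(g'\triangleright f))(g'\triangleleft f)$. Maps $\sigma:G\times F\times F\to\Bbbk^\times$ and $\tau:G\times G\times F\to\Bbbk^\times$ satisfy: $\sigma(g;1_F,f)=\sigma(g;f,1_F)=\sigma(1_G;f,f')=1$; $\sigma(g\triangleleft f;f',f'')\sigma(g;f,f'f'')=\sigma(g;f,f')\sigma(g;ff',f'')$; $\tau(1_G,g;f)=\tau(g,1_G;f)=\tau(g,g';1_F)=1$; $\tau(g,g';g''\triangleright f)\tau(gg',g'';f)=\tau(g,g'g'';f)\tau(g',g'';f)$; and $\sigma(gg';f,f')\tau(g,g';ff')=\sigma(g;g'\triangleright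 f,(g'\triangleleft f)\triangleright f')\sigma(g';f,f')\tau(g,g';f)\tau(g\triangleleft(g'\triangleright f),g'\triangleleft f;f')$. $H$ has basis $\{p_g\#f\}$, product $(p_g\#f)(p_{g'}\#f')=\delta_{g\triangleleft f,g'}\sigma(g;f,f')p_g\#ff'$, coproduct $\Delta(p_g\#f)=\sum_{x\in G}\tau(gx^{-1},x;f)\,p_{gx^{-1}}\#(x\triangleright f)\otimes p_x\#f$, counit $\varepsilon(p_g\#f)=\delta_{g,1_G}$; $C_f$ is a subcoalgebra. $G_f=\{g\in G\mid g\triangleright f=f\}$. $\Bbbk^{G_f}_{\tau_f}$ is the coalgebra with basis $\{p_g\}_{g\in G_f}$, $\Delta(p_g)=\sum_{x\in G_f}\tau(gx^{-1},x;f)p_{gx^{-1}}\otimes p_x$, $\varepsilon(p_g)=\delta_{g,1_G}$. $H'_f$ is the coalgebra with basis $\{p_g\#f'\mid g\in G_f,f'\in F\}$ and $\Delta(p_g\#f')=\sum_{x\in G_f}\tau(gx^{-1},x;f')p_{gx^{-1}}\#(x\triangleright f')\otimes p_x\#f'$; $H$ is a left $H'_f$-comodule via $(\pi_f\otimes\mathrm{id})\Delta$ with $\pi_f$ killing $p_g\#f'$ for $g\notin G_f$. For a right $\Bbbk^{G_f}_{\tau_f}$-comodule $V$ with $\rho(v)=\sum_{g\in G_f}v_g\otimes p_g$, $V\otimes\Bbbk f$ is a right $H'_f$-comodule by $v\otimes f\mapsto\sum_{g}v_g\otimes f\otimes p_g\#f$, and $\tilde V=(V\otimes\Bbbk f)\Box_{H'_f}H$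 is the cotensor product, a right $H$-comodule (in fact a $C_f$-comodule) via $\mathrm{id}\otimes\Delta$. *)

(* Defs.v *)
From HB Require Import structures.
From mathcomp Require Import all_boot all_order all_algebra all_fingroup.
From mathcomp Require Import boolp classical_sets functions cardinality fsbigop.

Set Implicit Arguments.
Unset Strict Implicit.
Unset Printing Implicit Defensive.
Import GRing.Theory.
Local Open Scope ring_scope.

(* lact g x  is  g |> x   (left action of G on the set F)                     *)
(* ract g x  is  g <| x   (right action of F on the set G)                    *)

Definition is_matched_pair (F : groupType) (G : finGroupType)
    (lact : G -> F -> F) (ract : G -> F -> G) : Prop :=
  (forall x, lact 1%g x = x) /\
  (forall g g' x, lact (g * g')%g x = lact g (lact g' x)) /\
  (forall g, ract g 1%g = g) /\
  (forall g x y, ract g (x * y)%g = ract (ract g x) y) /\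
  (forall g x y, lact g (x * y)%g = (lact g x * lact (ract g x) y)%g) /\
  (forall g g' x, ract (g * g')%g x = (ract g (lact g' x) * ract g' x)%g).

Definition sigma_tau_conditions (K : fieldType) (F : groupType) (G : finGroupType)
    (lact : G -> F -> F) (ract : G -> F -> G)
    (sigma : G -> F -> F -> K) (tau : G -> G -> F -> K) : Prop :=
  (forall g x y, sigma g x y != 0) /\
  (forall g g' x, tau g g' x != 0) /\
  (forall g x, sigma g 1%g x = 1 /\ sigma g x 1%g = 1) /\
  (forall x y, sigma 1%g x y = 1) /\
  (forall g x y z,
      sigma (ract g x) y z * sigma g x (y * z)%g
      = sigma g x y * sigma g (x * y)%g z) /\
  (forall g x, tau 1%g g x = 1 /\ tau g 1%g x = 1) /\
  (forall g g', tau g g' 1%g = 1) /\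
  (forall g g' g'' x,
      tau g g' (lact g'' x) * tau (g * g')%g g'' x
      = tau g (g' * g'')%g x * tau g' g'' x) /\
  (forall g g' x y,
      sigma (g * g')%g x y * tau g g' (x * y)%g
      = sigma g (lact g' x) (lact (ract g' x) y) * sigma g' x y * tau g g' x
        * tau (ract g (lact g' x)) (ract g' x) y).

(* Coalgebras with a distinguished basis.  A coalgebra is given by a basis    *)
(* type B, a predicate S : pred B selecting the basis elements spanning the   *)
(* (sub)coalgebra, structure constants D b b1 b2 (Delta(b) = sum D b b1 b2    *)
(* b1 (x) b2) and the counit values e b.                                      *)
(* A right comodule over such a coalgebra C = span S: an ambient K-space amb, *)
(* a subspace csp of it (the comodule itself), and the coaction written in    *)
(* coordinates: rho(v) = sum_b (cco v b) (x) b, cco v b = 0 for b not in S.   *)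

Record comod (K : fieldType) (B : Type) := Comod {
  camb : lmodType K;
  csp : camb -> Prop;
  cco : camb -> B -> camb }.
Arguments Comod {K B}.
Arguments camb {K B}.
Arguments csp {K B}.
Arguments cco {K B}.

Section Comodules.
Variables (K : fieldType) (B : choiceType) (S : pred B)
          (D : B -> B -> B -> K) (e : B -> K).

Definition is_comod (M : comod K B) : Prop :=
  csp M 0 /\
  (forall (a : K) v w, csp M v -> csp M w -> csp M (a *: v + w)) /\
  (forall v b, csp M v -> csp M (cco M v b)) /\
  (forall (a : K) v w b, csp M v -> csp M w ->
      cco M (a *: v + w) b = a *: cco M v b + cco M w b) /\
  (forall v, csp M v -> finite_set [set b | cco M v b != 0]) /\
  (forall v b, csp M v -> ~~ S b -> cco M v b = 0) /\
  (* coassociativity: (rho (x) id) rho = (id (x) Delta) rho *)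
  (forall v b1 b2, csp M v ->
      cco M (cco M v b2) b1 = \sum_(b \in setT) D b b1 b2 *: cco M v b) /\
  (forall v, csp M v -> \sum_(b \in setT) e b *: cco M v b = v).

Definition comod_hom (M N : comod K B) (phi : camb M -> camb N) : Prop :=
  (forall v, csp M v -> csp N (phi v)) /\
  (forall (a : K) v w, csp M v -> csp M w -> phi (a *: v + w) = a *: phi v + phi w) /\
  (forall v b, csp M v -> cco N (phi v) b = phi (cco M v b)).

Definition hom_eq (M N : comod K B) (phi psi : camb M -> camb N) : Prop :=
  forall v, csp M v -> phi v = psi v.

Definition comod_iso (M N : comod K B) : Prop :=
  exists (phi : camb M -> camb N) (psi : camb N -> camb M),
    [/\ comod_hom phi, comod_hom psi,
        (forall v, csp M v -> psi (phi v) = v) &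
        (forall w, csp N w -> phi (psi w) = w)].

Definition fin_dim (M : comod K B) : Prop :=
  exists s : seq (camb M), (forall i, (i < size s)%N -> csp M (nth 0 s i)) /\
    forall v, csp M v -> exists c : 'I_(size s) -> K,
      v = \sum_(i < size s) c i *: nth 0 s i.

Definition fd_comod (M : comod K B) : Prop := is_comod M /\ fin_dim M.

Definition short_exact (M1 M M2 : comod K B)
    (i : camb M1 -> camb M) (p : camb M -> camb M2) : Prop :=
  [/\ comod_hom i, comod_hom p,
      (forall v w, csp M1 v -> csp M1 w -> i v = i w -> v = w),
      (forall u, csp M2 u -> exists2 v, csp M v & p v = u) &
      (forall v, csp M v -> (p v = 0 <-> exists2 w, csp M1 w & i w = v))].

(* Grothendieck group of the category of finite-dimensional comodules:       *)
(* formal Z-linear combinations of objects modulo the congruence generated by *)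
(* [M] = [M1] + [M2] for short exact sequences.                               *)
Definition fsum := seq (int * comod K B).

Definition valid_fsum (s : fsum) : Prop :=
  foldr (fun p acc => fd_comod p.2 /\ acc) True s.

Inductive gr_eq : fsum -> fsum -> Prop :=
  | gr_refl s : gr_eq s s
  | gr_sym s t : gr_eq s t -> gr_eq t s
  | gr_trans s t u : gr_eq s t -> gr_eq t u -> gr_eq s u
  | gr_catl u s t : gr_eq s t -> gr_eq (u ++ s) (u ++ t)
  | gr_catr u s t : gr_eq s t -> gr_eq (s ++ u) (t ++ u)
  | gr_comm s t : gr_eq (s ++ t) (t ++ s)
  | gr_merge (a b : int) M s : gr_eq ((a, M) :: (b, M) :: s) ((a + b, M) :: s)
  | gr_zero M s : gr_eq ((0, M) :: s) s
  | gr_ses M1 M M2 i p s : fd_comod M1 -> fd_comod M -> fd_comod M2 ->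
      @short_exact M1 M M2 i p -> gr_eq ((1, M) :: s) ((1, M1) :: (1, M2) :: s).

End Comodules.

Section Concrete.
Variables (K : fieldType) (F : groupType) (G : finGroupType)
          (lact : G -> F -> F) (tau : G -> G -> F -> K) (f : F).

Definition Gf : pred G := [pred g | lact g f == f].

(* k^{G_f}_{tau_f}: basis p_g, g in G_f;
   Delta(p_g) = sum_{x in G_f} tau(g x^-1, x; f) p_{g x^-1} (x) p_x *)
Definition DGf (g g1 g2 : G) : K :=
  if Gf g2 && (g1 == g * g2^-1)%g then tau g1 g2 f else 0.
Definition eG (g : G) : K := (g == 1%g)%:R.

(* H with basis p_g # x indexed by G * F;
   Delta(p_g#x) = sum_{y in G} tau(g y^-1, y; x) p_{g y^-1}#(y |> x) (x) p_y#x *)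
Definition DH (n n1 n2 : (G * F)%type) : K :=
  if [&& n2.2 == n.2, n1.1 == (n.1 * n2.1^-1)%g & n1.2 == lact n2.1 n.2]
  then tau n1.1 n2.1 n.2 else 0.
Definition eH (n : (G * F)%type) : K := (n.1 == 1%g)%:R.

Definition Cf : pred (G * F)%type := [pred n | [exists g', n.2 == lact g' f]].

(* H'_f has basis p_g # x with g in G_f, x in F;
   H is a left H'_f-comodule via (pi_f (x) id) Delta, i.e.
   lambda(n) = sum_{b, n'} Hprime_lcoeff n b n' b (x) n'. *)
Definition Hprime_lcoeff (n b n' : (G * F)%type) : K :=
  if Gf b.1 then DH n b n' else 0.

Section Cotensor.
Variable V : comod K G.

(* The H'_f-coaction on V (x) kf (identified with V):
   v (x) f |-> sum_g v_g (x) f (x) p_g#f. *)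
Definition Vf_coact (v : camb V) (b : (G * F)%type) : camb V :=
  if b.2 == f then cco V v b.1 else 0.

(* (V (x) kf) (x) H is realised as the finitely supported functions
   G * F -> V  (x = sum_n x(n) (x) f (x) n). *)
Definition cot_amb : lmodType K := ((G * F)%type -> camb V).

Definition cot_sp (x : cot_amb) : Prop :=
  finite_set [set n | x n != 0] /\
  (forall n, csp V (x n)) /\
  (forall (b : (G * F)%type) (n' : (G * F)%type), Gf b.1 ->
     Vf_coact (x n') b = \sum_(n \in setT) Hprime_lcoeff n b n' *: x n).

Definition cot_co (x : cot_amb) (n2 : (G * F)%type) : cot_amb :=
  fun n1 => \sum_(n \in setT) DH n n1 n2 *: x n.

Definition cotensor : comod K (G * F)%type := Comod cot_amb cot_sp cot_co.

End Cotensor.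

Definition cot_hom (V V' : comod K G) (phi : camb V -> camb V')
  : camb (cotensor V) -> camb (cotensor V') := fun x n => phi (x n).


Definition cot_fsum (s : fsum K G) : fsum K (G * F)%type :=
  map (fun p => (p.1, cotensor p.2)) s.

End Concrete.

Arguments cot_hom {K F G} lact tau f {V V'} phi _ : rename.

(* Main.v *)
Require Import Defs.
From HB Require Import structures.
From mathcomp Require Import all_boot all_order all_algebra all_fingroup.
From mathcomp Require Import finmap boolp classical_sets functions cardinality fsbigop.
Set Implicit Arguments. Unset Strict Implicit. Unset Printing Implicit Defensive.
Import GRing.Theory.
Local Open Scope ring_scope.
Local Open Scope classical_set_scope.

Lemma fsum1 (T : choiceType) (R : nmodType) (Fn : T -> R) n0 :
  (forall n, n != n0 -> Fn n = 0) -> \sum_(n \in [set: T]) Fn n = Fn n0.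
Proof.
move=> H; rewrite (fsbigTE [fset n0]%fset) ?big_seq_fset1 //.
by move=> i; rewrite inE => /H.
Qed.

Lemma fsum_pt (T : choiceType) (X : Type) (R : nmodType) (Fn : T -> X -> R) (A : set T) x :
  finite_set A -> (forall i, ~ A i -> Fn i = 0) ->
  (\sum_(i \in [set: T]) Fn i) x = \sum_(i \in [set: T]) Fn i x.
Proof.
move=> fA HA; rewrite (fsbigTE (fset_set A)) ?(fsbigTE (fset_set A) (fun i => Fn i x)).
- by rewrite fct_sumE.
- by move=> i; rewrite in_fset_set // => /negP; rewrite in_setE => /HA ->.
- by move=> i; rewrite in_fset_set // => /negP; rewrite in_setE => /HA ->.
Qed.

Section Lin.
Variables (K : fieldType) (M N : lmodType K) (P : M -> Prop) (phi : M -> N).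
Hypothesis P0 : P 0.
Hypothesis hl : forall (a : K) v w, P v -> P w -> phi (a *: v + w) = a *: phi v + phi w.
Lemma lin0 : phi 0 = 0.
Proof.
have h := hl 1 P0 P0; rewrite !scale1r addr0 in h.
by apply: (addIr (phi 0)); rewrite add0r -h.
Qed.
Lemma linZ a v : P v -> phi (a *: v) = a *: phi v.
Proof. by move=> Pv; have := hl a Pv P0; rewrite !addr0 lin0 addr0. Qed.
Lemma linD v w : P v -> P w -> phi (v + w) = phi v + phi w.
Proof. by move=> Pv Pw; have := hl 1 Pv Pw; rewrite !scale1r. Qed.
End Lin.

Section Gen.
Variables (K : fieldType) (B : choiceType) (S : pred B) (D : B -> B -> B -> K) (e : B -> K).

Section OneComod.
Variable (M : comod K B).
Hypothesis hM : is_comod S D e M.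

Lemma csp0 : csp M 0. Proof. by case: hM. Qed.
Lemma cspL a v w : csp M v -> csp M w -> csp M (a *: v + w).
Proof. by case: hM => _ [+ _]; apply. Qed.
Lemma cspZ a v : csp M v -> csp M (a *: v).
Proof. by move=> h; rewrite -[_ *: _]addr0; apply: cspL => //; apply: csp0. Qed.
Lemma cspD v w : csp M v -> csp M w -> csp M (v + w).
Proof. by move=> h1 h2; rewrite -[v]scale1r; apply: cspL. Qed.
Lemma csp_sum (I : Type) (r : seq I) (Fi : I -> camb M) :
  (forall i, csp M (Fi i)) -> csp M (\sum_(i <- r) Fi i).
Proof.
move=> h; elim: r => [|i r IH]; first by rewrite big_nil; apply: csp0.
by rewrite big_cons; apply: cspD.
Qed.
Lemma ccoP v b : csp M v -> csp M (cco M v b).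
Proof. by case: hM => _ [_ [+ _]]; apply. Qed.
Lemma ccoL a v w b : csp M v -> csp M w -> cco M (a *: v + w) b = a *: cco M v b + cco M w b.
Proof. by case: hM => _ [_ [_ [+ _]]]; apply. Qed.
Let ccoLb b : forall (a : K) v w, csp M v -> csp M w ->
  (fun v => cco M v b) (a *: v + w) = a *: (fun v => cco M v b) v + (fun v => cco M v b) w.
Proof. by move=> a v w hv hw; apply: ccoL. Qed.
Lemma cco0 b : cco M 0 b = 0.
Proof. exact: (lin0 csp0 (ccoLb b)). Qed.
Lemma ccoZ a v b : csp M v -> cco M (a *: v) b = a *: cco M v b.
Proof. exact: (linZ csp0 (ccoLb b)). Qed.
Lemma ccoD v w b : csp M v -> csp M w -> cco M (v + w) b = cco M v b + cco M w b.
Proof. by move=> hv hw; have := linD (ccoLb b) hv hw. Qed.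
Lemma cco_sum (I : Type) (r : seq I) (Fi : I -> camb M) b :
  (forall i, csp M (Fi i)) -> cco M (\sum_(i <- r) Fi i) b = \sum_(i <- r) cco M (Fi i) b.
Proof.
move=> h; elim: r => [|i r IH]; first by rewrite !big_nil cco0.
by rewrite !big_cons ccoD ?IH //; apply: csp_sum.
Qed.
Lemma ccofin v : csp M v -> finite_set [set b | cco M v b != 0].
Proof. by case: hM => _ [_ [_ [_ [+ _]]]]; apply. Qed.
Lemma ccosupp v b : csp M v -> ~~ S b -> cco M v b = 0.
Proof. by case: hM => _ [_ [_ [_ [_ [+ _]]]]]; apply. Qed.
Lemma ccoass v b1 b2 : csp M v ->
  cco M (cco M v b2) b1 = \sum_(b \in setT) D b b1 b2 *: cco M v b.
Proof. by case: hM => _ [_ [_ [_ [_ [_ [+ _]]]]]]; apply. Qed.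
Lemma ccounit v : csp M v -> \sum_(b \in setT) e b *: cco M v b = v.
Proof. by case: hM => _ [_ [_ [_ [_ [_ [_ +]]]]]]; apply. Qed.
End OneComod.

Section Homs.
Variables (M N : comod K B).
Hypotheses (hM : is_comod S D e M) (hN : is_comod S D e N).
Variable phi : camb M -> camb N.
Hypothesis hphi : comod_hom phi.
Lemma hom_csp v : csp M v -> csp N (phi v). Proof. by case: hphi => + _; apply. Qed.
Lemma hom_lin a v w : csp M v -> csp M w -> phi (a *: v + w) = a *: phi v + phi w.
Proof. by case: hphi => _ [+ _]; apply. Qed.
Lemma hom_co v b : csp M v -> cco N (phi v) b = phi (cco M v b).
Proof. by case: hphi => _ [_ +]; apply. Qed.
Let hlin : forall (a : K) v w, csp M v -> csp M w -> phi (a *: v + w) = a *: phi v + phi w.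
Proof. exact: hom_lin. Qed.
Lemma hom0 : phi 0 = 0.
Proof. exact: (lin0 (csp0 hM) hlin). Qed.
Lemma homZ a v : csp M v -> phi (a *: v) = a *: phi v.
Proof. exact: (linZ (csp0 hM) hlin). Qed.
Lemma homD v w : csp M v -> csp M w -> phi (v + w) = phi v + phi w.
Proof. by move=> hv hw; have := linD hlin hv hw. Qed.

Lemma hom_inv (psi : camb N -> camb M) :
  (forall w, csp N w -> csp M (psi w)) ->
  (forall v, csp M v -> psi (phi v) = v) ->
  (forall w, csp N w -> phi (psi w) = w) -> comod_hom psi.
Proof.
move=> hp l r; split => //; split.
- move=> a v w hv hw.
  have E : a *: v + w = phi (a *: psi v + psi w) by rewrite hom_lin; [rewrite !r | apply: hp | apply: hp].
  by rewrite E l //; apply: cspL => //; apply: hp.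
- move=> v b hv.
  have E : cco N v b = phi (cco M (psi v) b).
    by rewrite -hom_co; [rewrite r | apply: hp].
  by rewrite E l //; apply: (ccoP hM); apply: hp.
Qed.
End Homs.
End Gen.



Section Gr.
Variables (K : fieldType) (B : choiceType) (S : pred B) (D : B -> B -> B -> K) (e : B -> K).

Definition Z0 (A : lmodType K) : comod K B := Comod A (fun v => v = 0) (fun _ _ => 0).

Lemma Z0_fd A : fd_comod S D e (Z0 A).
Proof.
split.
  split; first by [].
  split; first by move=> a v w /= -> ->; rewrite scaler0 addr0.
  split; first by [].
  split; first by move=> a v w b /= _ _; rewrite scaler0 addr0.
  split; first by move=> v _; apply: (sub_finite_set _ (finite_set0 B)) => b /=; rewrite eqxx.
  split; first by [].
  split; first by move=> v b1 b2 _ /=; rewrite fsbig1 // => b _; rewrite scaler0.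
  by move=> v /= ->; rewrite fsbig1 // => b _; rewrite scaler0.
exists [::]; split; first by [].
by move=> v /= ->; exists (fun _ => 0); rewrite big_ord0.
Qed.

Lemma gr_zeroZ A s : gr_eq S D e s ((1, Z0 A) :: s).
Proof.
set Z := Z0 A.
have ses : short_exact (M1:=Z) (M:=Z) (M2:=Z) id id.
  split.
  - by split=> //; split=> // a v w /= -> ->; rewrite scaler0 addr0.
  - by split=> //; split=> // a v w /= -> ->; rewrite scaler0 addr0.
  - by move=> v w _ _.
  - by move=> u hu; exists u.
  - by move=> v /= ->; split=> // _; exists 0.
have E1 := gr_ses s (Z0_fd A) (Z0_fd A) (Z0_fd A) ses.
have E2 := gr_trans E1 (gr_merge S D e 1 1 Z s).
have E3 := gr_catl [:: (-1, Z)] E2; rewrite /= in E3.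
have E4 := gr_trans (gr_sym (gr_merge S D e (-1) 1 Z s)) (gr_trans E3 (gr_merge S D e (-1) (1+1) Z s)).
rewrite addNr addKr in E4.
exact: gr_trans (gr_sym (gr_zero S D e Z s)) E4.
Qed.

Lemma gr_iso1 M N s : fd_comod S D e M -> fd_comod S D e N -> comod_iso M N ->
  gr_eq S D e ((1, M) :: s) ((1, N) :: s).
Proof.
move=> fM fN [phi [psi [hphi hpsi l r]]].
have cM := fM.1; have cN := fN.1.
set Z := Z0 (camb M).
have ses : short_exact (M1:=Z) (M:=M) (M2:=N) (fun _ => 0) phi.
  split.
  - split; first by move=> v _; apply: csp0 cM.
    split; first by move=> *; rewrite scaler0 addr0.
    by move=> v b _; rewrite (cco0 cM).
  - exact: hphi.
  - by move=> v w /= -> ->.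
  - by move=> u hu; exists (psi u); [apply: (hom_csp hpsi) | apply: r].
  - move=> v hv; split.
      move=> hp; exists 0 => //; rewrite -(l v hv) hp.
      by rewrite (hom0 cN hpsi).
    by case=> w _ <-; apply: (hom0 cM hphi).
have E1 := gr_ses s (Z0_fd (camb M)) fM fN ses.
exact: gr_trans E1 (gr_sym (gr_zeroZ _ _)).
Qed.

Lemma gr_iso M N (a : int) s : fd_comod S D e M -> fd_comod S D e N -> comod_iso M N ->
  gr_eq S D e ((a, M) :: s) ((a, N) :: s).
Proof.
move=> fM fN iMN.
have P : forall (k : nat) u, gr_eq S D e ((k%:Z, M) :: u) ((k%:Z, N) :: u).
  elim=> [|k IH] u.
    exact: gr_trans (gr_zero _ _ _ _ _) (gr_sym (gr_zero _ _ _ _ _)).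
  have -> : (k.+1)%:Z = 1 + k%:Z by rewrite -addn1 PoszD addrC.
  apply: gr_trans (gr_sym (gr_merge _ _ _ _ _ _ _)) _.
  apply: gr_trans (gr_iso1 _ fM fN iMN) _.
  apply: gr_trans _ (gr_merge _ _ _ _ _ _ _).
  exact: (gr_catl [:: (1, N)] (IH u)).
have Nn : forall (k : nat) u, gr_eq S D e ((- k%:Z, M) :: u) ((- k%:Z, N) :: u).
  move=> k u.
  have h1 : forall X, gr_eq S D e ((k%:Z, X) :: (- k%:Z, X) :: u) u.
    move=> X; apply: gr_trans (gr_merge _ _ _ _ _ _ _) _.
    by rewrite subrr; apply: gr_zero.
  apply: gr_trans (gr_catl [:: (- k%:Z, M)] (gr_sym (h1 N))) _ => /=.
  apply: gr_trans (gr_catl [:: (- k%:Z, M)] (gr_sym (P k _))) _ => /=.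
  apply: gr_trans (gr_merge _ _ _ _ _ _ _) _.
  by rewrite addNr; apply: gr_zero.
case: a => [n|n]; first exact: P.
by rewrite NegzE; apply: Nn.
Qed.

Lemma gr_map_iso (g : comod K B -> comod K B) s :
  (forall M, fd_comod S D e M -> fd_comod S D e (g M) /\ comod_iso (g M) M) ->
  valid_fsum S D e s -> gr_eq S D e (map (fun p => (p.1, g p.2)) s) s.
Proof.
move=> hg; elim: s => [|[a M] s IH] /=; first by move=> _; apply: gr_refl.
case=> hM hs; have [fg iso] := hg M hM.
apply: gr_trans (gr_iso _ _ fg hM iso) _.
exact: (gr_catl [:: (a, M)] (IH hs)).
Qed.
End Gr.

Lemma gr_transport (K : fieldType) (B1 B2 : choiceType)
  (S1 : pred B1) (D1 : B1 -> B1 -> B1 -> K) (e1 : B1 -> K)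
  (S2 : pred B2) (D2 : B2 -> B2 -> B2 -> K) (e2 : B2 -> K)
  (g : comod K B1 -> comod K B2) :
  (forall M, fd_comod S1 D1 e1 M -> fd_comod S2 D2 e2 (g M)) ->
  (forall M1 M M2 (i : camb M1 -> camb M) (p : camb M -> camb M2),
     fd_comod S1 D1 e1 M1 -> fd_comod S1 D1 e1 M -> fd_comod S1 D1 e1 M2 ->
     short_exact i p ->
     exists (i' : camb (g M1) -> camb (g M)) (p' : camb (g M) -> camb (g M2)),
       short_exact i' p') ->
  forall s t, gr_eq S1 D1 e1 s t ->
  gr_eq S2 D2 e2 (map (fun p => (p.1, g p.2)) s) (map (fun p => (p.1, g p.2)) t).
Proof.
move=> hfd hses s t; elim=> {s t}.
- by move=> s; apply: gr_refl.
- by move=> s t _ IH; apply: gr_sym.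
- by move=> s t u _ IH1 _ IH2; apply: gr_trans IH2.
- by move=> u s t _ IH; rewrite !map_cat; apply: gr_catl.
- by move=> u s t _ IH; rewrite !map_cat; apply: gr_catr.
- by move=> s t; rewrite !map_cat; apply: gr_comm.
- by move=> a b M s /=; apply: gr_merge.
- by move=> M s /=; apply: gr_zero.
- move=> M1 M M2 i p s f1 f f2 hs /=.
  have [i' [p' hs']] := hses _ _ _ _ _ f1 f f2 hs.
  exact: gr_ses (hfd _ f1) (hfd _ f) (hfd _ f2) hs'.
Qed.

Section Span.
Variables (K : fieldType) (M : lmodType K).

Definition spans (s : seq M) (v : M) :=
  exists k : nat -> K, v = \sum_(0 <= i < size s) k i *: s`_i.

Lemma spansD s v w : spans s v -> spans s w -> spans s (v + w).
Proof.
move=> [k1 ->] [k2 ->]; exists (fun i => k1 i + k2 i); rewrite -big_split.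
by apply: eq_bigr => i _; rewrite scalerDl.
Qed.

Lemma spans_catl s t v : spans s v -> spans (s ++ t) v.
Proof.
move=> [k ->]; exists (fun i => if (i < size s)%N then k i else 0).
rewrite size_cat (big_cat_nat (leq0n (size s)) (leq_addr _ _)) /=.
rewrite [X in _ = _ + X]big_nat_cond [X in _ = _ + X]big1 ?addr0; last first.
  by move=> i /andP [/andP [hi _] _]; rewrite ltnNge hi /= scale0r.
by apply: eq_big_nat => i /andP [_ hi]; rewrite hi nth_cat hi.
Qed.

Lemma spans_catr s t v : spans t v -> spans (s ++ t) v.
Proof.
move=> [k ->]; exists (fun i => if (i < size s)%N then 0 else k (i - size s)%N).
rewrite size_cat (big_cat_nat (leq0n (size s)) (leq_addr _ _)) /=.
rewrite [X in _ = X + _]big_nat_cond [X in _ = X + _]big1 ?add0r; last first.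
  by move=> i /andP [/andP [_ hi] _]; rewrite hi scale0r.
have E := big_addn 0 (size s + size t) (size s) xpredT
  (fun i => (if (i < size s)%N then 0 else k (i - size s)%N) *: (s ++ t)`_i).
rewrite add0n in E; rewrite E addKn.
apply: eq_big_nat => i _.
by rewrite ltnNge leq_addl /= addnK nth_cat ltnNge leq_addl /= addnK.
Qed.

Lemma spans_nil : spans [::] 0.
Proof. by exists (fun=> 0); rewrite big_geq. Qed.

End Span.

Lemma spans_lin (K : fieldType) (M M' : lmodType K) (L : M -> M') (P : M -> Prop) s v :
  P 0 -> (forall (a : K) x y, P x -> P y -> P (a *: x + y)) ->
  (forall (a : K) x y, P x -> P y -> L (a *: x + y) = a *: L x + L y) ->
  (forall i, (i < size s)%N -> P s`_i) -> spans s v -> spans (map L s) (L v).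
Proof.
move=> P0 Pc Ll Ps [k ->]; exists k; rewrite size_map.
have -> : \sum_(0 <= i < size s) k i *: (map L s)`_i =
          \sum_(0 <= i < size s) k i *: L s`_i.
  by apply: eq_big_nat => i /andP [_ hi]; rewrite (nth_map 0) // (set_nth_default 0).
have L0 := lin0 P0 Ll.
rewrite big_nat_cond [X in _ = X]big_nat_cond.
match goal with |- L ?a = ?b => suff hh : P a /\ L a = b by case: hh end.
apply: (big_ind2 (fun x y => P x /\ L x = y)).
- by split; [ | rewrite L0].
- move=> x1 x2 y1 y2 [hx1 <-] [hy1 <-]; split.
    by rewrite -[x1]scale1r; apply: Pc.
  by have := Ll 1 _ _ hx1 hy1; rewrite !scale1r.
- move=> i /andP [/andP [_ hi] _]; split.
    by rewrite -[_ *: _]addr0; apply: Pc => //; apply: Ps.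
  by rewrite (linZ P0 Ll) //; apply: Ps.
Qed.

Lemma Pnth_map (K : fieldType) (M M' : lmodType K) (L : M -> M') (P : M -> Prop) (Q : M' -> Prop) s :
  (forall i, (i < size s)%N -> P s`_i) -> (forall x, P x -> Q (L x)) ->
  forall i, (i < size (map L s))%N -> Q (map L s)`_i.
Proof.
move=> hP hL i; rewrite size_map => hi.
by rewrite (set_nth_default (L 0)) ?size_map // (nth_map 0) //; apply: hL; apply: hP.
Qed.

Lemma spans_flat (K : fieldType) (M : lmodType K) (I : Type) (r : seq I)
  (sl : I -> seq M) (y : I -> M) :
  (forall c, spans (sl c) (y c)) ->
  spans (flatten (map sl r)) (\sum_(c <- r) y c).
Proof.
move=> h; elim: r => [|c r IH] /=; first by rewrite big_nil; apply: spans_nil.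
by rewrite big_cons; apply: spansD; [apply: spans_catl | apply: spans_catr].
Qed.

Lemma Pnth_flat (K : fieldType) (M : lmodType K) (I : Type) (r : seq I)
  (sl : I -> seq M) (P : M -> Prop) :
  (forall c i, (i < size (sl c))%N -> P (sl c)`_i) ->
  forall i, (i < size (flatten (map sl r)))%N -> P (flatten (map sl r))`_i.
Proof.
move=> h; elim: r => [|c r IH] //= i; rewrite size_cat nth_cat.
case: ifP => hi hlt; first exact: h.
by apply: IH; rewrite ltn_subLR // leqNgt hi.
Qed.

Lemma fin_dim_spans (K : fieldType) (B : choiceType) (M : comod K B) s :
  (forall i, (i < size s)%N -> csp M (nth 0 s i)) -> (forall v, csp M v -> spans s v) ->
  fin_dim M.
Proof.
move=> h1 h2; exists s; split => // v hv; have [k ->] := h2 v hv.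
by exists (fun i => k i); rewrite big_mkord.
Qed.

Lemma spans_fin_dim (K : fieldType) (B : choiceType) (M : comod K B) :
  fin_dim M -> exists s, (forall i, (i < size s)%N -> csp M (nth 0 s i)) /\
                         (forall v, csp M v -> spans s v).
Proof.
move=> [s [h1 h2]]; exists s; split => // v hv; have [c ->] := h2 v hv.
exists (fun i => if @insub _ (fun i => (i < size s)%N) 'I_(size s) i is Some j then c j else 0).
rewrite big_mkord; apply: eq_bigr => j _.
by rewrite valK.
Qed.



Section Conc.
Variables (K : fieldType) (F : groupType) (G : finGroupType)
  (lact : G -> F -> F) (tau : G -> G -> F -> K) (f : F).
Hypotheses (l1 : forall x, lact 1%g x = x)
  (lM : forall g g' x, lact (g * g')%g x = lact g (lact g' x))
  (t1l : forall g x, tau 1%g g x = 1) (t1r : forall g x, tau g 1%g x = 1)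
  (tc : forall g g' g'' x, tau g g' (lact g'' x) * tau (g * g')%g g'' x
                         = tau g (g' * g'')%g x * tau g' g'' x)
  (tnz : forall g g' x, tau g g' x != 0).

Local Notation SG := (Gf lact f).
Local Notation DG := (DGf lact tau f).
Local Notation eGG := (@eG K G).
Local Notation SC := (Cf lact f).
Local Notation DC := (DH lact tau).
Local Notation eC := (@eH K F G).

Lemma lactK g x : lact g^-1 (lact g x) = x.
Proof. by rewrite -lM mulVg l1. Qed.
Lemma lactKV g x : lact g (lact g^-1 x) = x.
Proof. by rewrite -lM mulgV l1. Qed.
Lemma GfE g : Gf lact f g = (lact g f == f). Proof. by []. Qed.
Lemma Gf1 : Gf lact f 1%g. Proof. by rewrite GfE l1. Qed.
Lemma GfM_neq h x : Gf lact f h -> x != f -> lact h x != f.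
Proof.
rewrite GfE => /eqP hh; apply: contra => /eqP E.
by rewrite -(lactK h x) E -{1}hh lactK.
Qed.

Lemma cot_co_pt (V : comod K G) (x : cot_amb F V) n2 n1 :
  cot_co lact tau x n2 n1 =
  if n1.2 == lact n2.1 n2.2 then tau n1.1 n2.1 n2.2 *: x (n1.1 * n2.1, n2.2)%g else 0.
Proof.
rewrite /cot_co (@fsum1 _ _ _ (n1.1 * n2.1, n2.2)%g).
  rewrite /DH /= eqxx mulgK eqxx /=.
  by case: ifP => _; rewrite ?scale0r.
move=> [a c] hn; rewrite /DH /=.
case: ifP => [/and3P [/eqP e2 /eqP e1 _]|]; last by rewrite scale0r.
by move: hn; rewrite e2 e1 mulgKV eqxx.
Qed.

Lemma hsum_pt (V : comod K G) (x : cot_amb F V) b n' :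
  \sum_(n \in [set: (G * F)%type]) Hprime_lcoeff lact tau f n b n' *: x n =
  if Gf lact f b.1 then cot_co lact tau x n' b else 0.
Proof.
rewrite /Hprime_lcoeff; case: ifP => _ //.
by rewrite fsbig1 // => n _; rewrite scale0r.
Qed.

Section OneV.
Variable V : comod K G.
Hypothesis hV : is_comod SG DG eGG V.

Lemma counitV v : csp V v -> cco V v 1%g = v.
Proof.
move=> hv; rewrite -{2}(ccounit hV hv) (@fsum1 _ _ _ 1%g) /eG ?eqxx ?scale1r //.
by move=> n /negbTE ->; rewrite scale0r.
Qed.

Lemma coassV v g1 g2 : csp V v ->
  cco V (cco V v g2) g1 = if Gf lact f g2 then tau g1 g2 f *: cco V v (g1 * g2)%g else 0.
Proof.
move=> hv; rewrite (ccoass hV _ _ hv) (@fsum1 _ _ _ (g1 * g2)%g).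
  by rewrite /DGf mulgK eqxx andbT; case: ifP; rewrite ?scale0r.
move=> b hb; rewrite /DGf; case: ifP => [/andP [_ /eqP E]|]; last by rewrite scale0r.
by move: hb; rewrite E mulgKV eqxx.
Qed.

Lemma cot_spP (x : cot_amb F V) :
  cot_sp lact tau f x <->
  [/\ finite_set [set n | x n != 0], (forall n, csp V (x n)),
      (forall a c, lact a c != f -> x (a, c) = 0) &
      (forall h a c, Gf lact f h -> lact a c = f ->
          cco V (x (a, c)) h = tau h a c *: x ((h * a)%g, c))].
Proof.
split.
- case=> fin [cs hc]; split => //.
  + move=> a c hne; have := hc (1%g, f) (a, c) Gf1.
    rewrite /Vf_coact /= eqxx counitV // hsum_pt /= Gf1 cot_co_pt /=.
    by rewrite eq_sym (negbTE hne).
  + move=> h a c hh hac; have := hc (h, f) (a, c) hh.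
    by rewrite /Vf_coact /= eqxx hsum_pt /= hh cot_co_pt /= hac eqxx.
- case=> fin cs Z R; split => //; split => //.
  move=> [h q] [a c] /= hh; rewrite /Vf_coact /= hsum_pt /= hh cot_co_pt /=.
  have [->|hq] := eqVneq q f.
    have [hac|hac] := eqVneq f (lact a c).
      by rewrite R // hac.
    by rewrite Z ?(cco0 hV) // eq_sym.
  have [E|] := eqVneq q (lact a c) => //.
  rewrite Z ?scaler0 //= lM -E; exact: GfM_neq.
Qed.

Lemma fin_col (y : cot_amb F V) c :
  (forall n, n.2 != c -> y n = 0) -> finite_set [set n | y n != 0].
Proof.
move=> h; apply: (sub_finite_set (B := [set (g, c) | g in [set: G]])).
  move=> [a q] /= hne; exists a => //.
  case: (eqVneq q c) => [->//|hq]; by move: hne; rewrite h ?eqxx.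
exact: finite_image finite_finset.
Qed.

Definition xv (v : camb V) : cot_amb F V := fun n => if n.2 == f then cco V v n.1 else 0.

Lemma xv_in v : csp V v -> cot_sp lact tau f (xv v).
Proof.
move=> hv; apply/cot_spP; split.
- by apply: (fin_col (c := f)) => n; rewrite /xv => /negbTE ->.
- by move=> n; rewrite /xv; case: ifP => _; [apply: (ccoP hV) | apply: (csp0 hV)].
- move=> a c hne; rewrite /xv /=; case: eqP => // E.
  by rewrite (ccosupp hV) // GfE -{1}E.
- move=> h a c hh hac; rewrite /xv /=; case: eqP => [E|]; last by rewrite (cco0 hV) scaler0.
  by move: hac; rewrite E => hac; rewrite coassV // GfE hac eqxx.
Qed.

Lemma xv_lin a v w : csp V v -> csp V w -> xv (a *: v + w) = a *: xv v + xv w.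
Proof.
move=> hv hw; apply/funext => n; rewrite addrfctE scalrfctE /xv /=.
by case: ifP => _; rewrite ?(ccoL hV) // scaler0 addr0.
Qed.

Lemma xv1 v : csp V v -> xv v (1%g, f) = v.
Proof. by move=> hv; rewrite /xv /= eqxx counitV. Qed.

Lemma xv0 : xv 0 = 0.
Proof. by apply/funext => n; rewrite /xv; case: ifP => // _; rewrite (cco0 hV). Qed.

Lemma cot_co_col (x : cot_amb F V) a c : cot_sp lact tau f x -> lact a c = f ->
  cot_co lact tau x (a, c) = xv (x (a, c)).
Proof.
move=> /cot_spP [fin cs Z R] hac; apply/funext => -[p q].
rewrite cot_co_pt /xv /= hac; case: eqP => // _.
have [hp|hp] := boolP (Gf lact f p); first by rewrite R.
rewrite (ccosupp hV) // Z ?scaler0 //; by rewrite lM hac.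
Qed.

Lemma cot_co_xv v g : csp V v -> Gf lact f g -> cot_co lact tau (xv v) (g, f) = xv (cco V v g).
Proof.
move=> hv hg; have hgf : lact g f = f by apply/eqP.
by rewrite (cot_co_col (xv_in hv) hgf) /xv /= eqxx.
Qed.

Lemma cot_co_fin (x : cot_amb F V) : cot_sp lact tau f x ->
  finite_set [set b | cot_co lact tau x b != 0].
Proof.
  move=> /cot_spP [fx cx Zx Rx].
  apply: (sub_finite_set (B := [set: G] `*` [set n.2 | n in [set n | x n != 0]])).
    move=> [p q] /= hne; split => //.
    case: (pselect (exists n1, cot_co lact tau x (p, q) n1 != 0)) => [[n1]|H].
      rewrite cot_co_pt; case: ifP => _; last by rewrite eqxx.
      move=> h; exists (n1.1 * p, q)%g => //.
      by apply: contraNneq h => ->; rewrite scaler0.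
    exfalso; move/eqP: hne; apply; apply/funext => n1; apply/eqP; apply/negPn/negP => h.
    by apply: H; exists n1.
  by apply: finite_setX; [apply: finite_finset | apply: finite_image].
Qed.

Lemma TV_comod : is_comod SC DC eC (cotensor lact tau f V).
Proof.
have Z0 : cot_sp lact tau f (0 : cot_amb F V).
  apply/cot_spP; split => //.
  - by apply: (fin_col (c := f)).
  - by move=> n; apply: (csp0 hV).
  - by move=> h a c _ _; rewrite (cco0 hV) scaler0.
rewrite /is_comod /cotensor /=.
split; first exact: Z0.
split.
  move=> a x w /cot_spP [fx cx Zx Rx] /cot_spP [fw cw Zw Rw]; apply/cot_spP; split.
  - apply: (sub_finite_set (B := [set n | x n != 0] `|` [set n | w n != 0])); last by rewrite finite_setU.
    move=> n /= hn; have [hx|hx] := eqVneq (x n) 0; last by left.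
    have [hw|hw] := eqVneq (w n) 0; last by right.
    by move: hn; rewrite addrfctE scalrfctE /= hx hw scaler0 addr0 eqxx.
  - by move=> n; rewrite addrfctE scalrfctE /=; apply: (cspL hV).
  - by move=> p q hne; rewrite addrfctE scalrfctE /= Zx ?Zw ?scaler0 ?addr0.
  - move=> h p q hh hpq; rewrite addrfctE scalrfctE /= (ccoL hV) // Rx ?Rw //.
    by rewrite scalerDr !scalerA mulrC.
split.
  move=> x [p q] /cot_spP [fx cx Zx Rx]; apply/cot_spP; split.
  - apply: (fin_col (c := lact p q)) => n hn; rewrite cot_co_pt /=.
    by rewrite (negbTE hn).
  - move=> n; rewrite cot_co_pt; case: ifP => _; [apply: (cspZ hV); apply: cx | apply: (csp0 hV)].
  - move=> a c hne; rewrite cot_co_pt /=; case: eqP => // E.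
    by rewrite Zx ?scaler0 // lM -E.
  - move=> h a c hh hac; rewrite !cot_co_pt /=.
    case: eqP => [E|_]; last by rewrite (cco0 hV) scaler0.
    rewrite (ccoZ hV) // Rx //; last by rewrite lM -E.
    rewrite !scalerA E mulgA; congr (_ *: _).
    by rewrite tc mulrC.
split.
  move=> a x w b _ _; apply/funext => n; rewrite !addrfctE !scalrfctE /= !cot_co_pt /=.
  by case: ifP => _; rewrite ?scaler0 ?addr0 // scalerDr !scalerA mulrC.
split; first exact: cot_co_fin.
split.
  move=> x [p q] /cot_spP [fx cx Zx Rx] hb; apply/funext => n1; rewrite cot_co_pt /=.
  case: ifP => _ //; rewrite Zx ?scaler0 //; apply/eqP => E.
  move/negP: hb; apply; apply/existsP; exists (n1.1 * p)^-1%g => /=.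
  by rewrite -E lactK.
split.
  move=> x [p1 q1] [p2 q2] hx; rewrite /= (@fsum1 _ _ _ (p1 * p2, q2)%g).
    apply/funext => -[a c]; rewrite /DH /= mulgK !eqxx /= scalrfctE /= !cot_co_pt /=.
    have [E|_] := eqVneq q1 (lact p2 q2); last by rewrite scale0r; case: ifP => _; rewrite ?scaler0.
    rewrite lM -E; case: ifP => _; last by rewrite scaler0.
    rewrite !scalerA mulgA; congr (_ *: _); rewrite E tc mulrC //.
  move=> [p q] hn; rewrite /DH /=; case: ifP => [/and3P [/eqP e2 /eqP e1 _]|]; last by rewrite scale0r.
  by move: hn; rewrite -e2 e1 mulgKV eqxx.
move=> x hx; apply/funext => -[a c].
rewrite (fsum_pt _ (A := [set b | cot_co lact tau x b != 0])).
- rewrite (@fsum1 _ _ _ (1%g, c)) /=.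
    by rewrite /eH /= eqxx scale1r cot_co_pt /= l1 eqxx t1r mulg1 scale1r.
  move=> [p q] hpq; rewrite scalrfctE /eH /=; have [E1|] := eqVneq p 1%g; last by rewrite scale0r.
  rewrite E1 cot_co_pt /= l1; case: eqP => [E|]; last by rewrite scaler0.
  by move: hpq; rewrite E E1 eqxx.
- exact: cot_co_fin.
- by move=> b /= /negP/negPn/eqP ->; rewrite scaler0.
Qed.

End OneV.

Lemma cot_hom_hom (V V' : comod K G) (phi : camb V -> camb V') :
  is_comod SG DG eGG V -> is_comod SG DG eGG V' -> comod_hom phi ->
  comod_hom (cot_hom lact tau f phi).
Proof.
move=> hV hV' hphi; rewrite /comod_hom /cotensor /=; split; [|split].
- move=> x /(cot_spP hV) [fx cx Zx Rx]; apply/(cot_spP hV'); split.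
  + apply: (sub_finite_set (B := [set n | x n != 0])) => // n /=; rewrite /cot_hom.
    by apply: contraNN => /eqP ->; rewrite (hom0 hV hphi).
  + by move=> n; apply: (hom_csp hphi).
  + by move=> a c hne; rewrite /cot_hom Zx // (hom0 hV hphi).
  + move=> h a c hh hac; rewrite /cot_hom (hom_co hphi) // Rx //.
    by rewrite (homZ hV hphi).
- move=> a x w hx hw; apply/funext => n; rewrite /cot_hom !addrfctE !scalrfctE /=.
  by rewrite (hom_lin hphi) //; [case: hx => _ [+ _] | case: hw => _ [+ _]]; apply.
- move=> x b hx; apply/funext => n; rewrite /cot_hom !cot_co_pt.
  case: ifP => _; last by rewrite (hom0 hV hphi).
  by rewrite (homZ hV hphi) //; case: hx => _ [+ _]; apply.
Qed.

Lemma cot_faithful (V V' : comod K G) (phi psi : camb V -> camb V') :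
  is_comod SG DG eGG V -> is_comod SG DG eGG V' -> comod_hom phi -> comod_hom psi ->
  hom_eq (cot_hom lact tau f phi) (cot_hom lact tau f psi) -> hom_eq phi psi.
Proof.
move=> hV hV' _ _ H v hv; have := H (xv v) (xv_in hV hv).
by move/(congr1 (fun y => y (1%g, f))); rewrite /cot_hom (xv1 hV hv).
Qed.

Lemma cot_full (V V' : comod K G)
  (chi : camb (cotensor lact tau f V) -> camb (cotensor lact tau f V')) :
  is_comod SG DG eGG V -> is_comod SG DG eGG V' -> comod_hom chi ->
  exists phi : camb V -> camb V',
    comod_hom phi /\ hom_eq chi (cot_hom lact tau f phi).
Proof.
move=> hV hV' hchi.
have hTV := TV_comod hV; have hTV' := TV_comod hV'.
have chisp : forall x, cot_sp lact tau f x -> cot_sp lact tau f (chi x).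
  by move=> x hx; apply: (hom_csp hchi).
have chico : forall x b, cot_sp lact tau f x ->
    cot_co lact tau (chi x) b = chi (cot_co lact tau x b).
  by move=> x b hx; apply: (hom_co hchi).
exists (fun v => chi (xv v) (1%g, f)); split; [split; [|split] |].
- move=> v hv; have /(cot_spP hV') [_ cs _ _] := chisp _ (xv_in hV hv); exact: cs.
- move=> a v w hv hw /=; rewrite (xv_lin hV) // (hom_lin hchi).
  + by rewrite addrfctE scalrfctE.
  + exact (xv_in hV hv).
  + exact (xv_in hV hw).
- move=> v b hv /=; have [hb|hb] := boolP (Gf lact f b).
    have /(cot_spP hV') [_ _ _ R'] := chisp _ (xv_in hV hv).
    rewrite (R' b 1%g f hb (l1 f)) t1r scale1r mulg1.
    rewrite -(cot_co_xv hV hv hb) -(chico _ _ (xv_in hV hv)) cot_co_pt /= (eqP hb) eqxx.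
    by rewrite t1l scale1r mul1g.
  have /(cot_spP hV') [_ cs _ _] := chisp _ (xv_in hV hv).
  rewrite (ccosupp hV') // (ccosupp hV) // (xv0 hV) (hom0 hTV hchi) //.
- move=> x hx; apply/funext => -[a c]; rewrite /cot_hom.
  have [hac|hac] := eqVneq (lact a c) f.
    rewrite -(cot_co_col hV hx hac) -chico // cot_co_pt /= hac eqxx.
    by rewrite t1l scale1r mul1g.
  have /(cot_spP hV') [_ _ Z' _] := chisp _ hx.
  have /(cot_spP hV) [_ _ Z _] := hx.
  by rewrite Z' // Z // (xv0 hV) (hom0 hTV hchi).
Qed.

Definition pk (c : F) : G := odflt 1%g [pick y | lact y c == f].
Definition ol : seq F := undup [seq lact g f | g <- enum G].

Lemma pkP a c : lact a c = f -> lact (pk c) c = f.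
Proof.
move=> hac; rewrite /pk; case: pickP => [y /eqP //|H].
by have := H a; rewrite hac eqxx.
Qed.

Lemma olP c : reflect (exists g, c = lact g f) (c \in ol).
Proof.
rewrite mem_undup; apply: (iffP mapP) => [[g _ ->]|[g ->]]; first by exists g.
by exists g; rewrite ?mem_enum.
Qed.

Lemma ol_orb a c : lact a c = f -> c \in ol.
Proof. by move=> hac; apply/olP; exists a^-1%g; rewrite -hac lactK. Qed.

Lemma pk_ol c : c \in ol -> lact (pk c) c = f.
Proof. by case/olP => g ->; apply: (@pkP g^-1%g); rewrite lactK. Qed.

Lemma ol_uniq : uniq ol. Proof. exact: undup_uniq. Qed.

Lemma Cf_ol b : Cf lact f b = (b.2 \in ol).
Proof. by apply/existsP/olP => [[g /eqP ->]|[g ->]]; exists g. Qed.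

Lemma pkV c : c \in ol -> lact (pk c)^-1%g f = c.
Proof. by move=> hc; rewrite -(pk_ol hc) lactK. Qed.

Lemma DHsum (M : lmodType K) (y : G * F -> M) n2 n1 :
  \sum_(n \in [set: (G * F)%type]) DH lact tau n n1 n2 *: y n =
  if n1.2 == lact n2.1 n2.2 then tau n1.1 n2.1 n2.2 *: y (n1.1 * n2.1, n2.2)%g else 0.
Proof.
rewrite (@fsum1 _ _ _ (n1.1 * n2.1, n2.2)%g).
  rewrite /DH /= eqxx mulgK eqxx /=.
  by case: ifP => _; rewrite ?scale0r.
move=> [a c] hn; rewrite /DH /=.
case: ifP => [/and3P [/eqP e2 /eqP e1 _]|]; last by rewrite scale0r.
by move: hn; rewrite e2 e1 mulgKV eqxx.
Qed.

Section OneN.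
Variable N : comod K (G * F)%type.
Hypothesis hN : is_comod SC DC eC N.

Lemma coassN w b1 b2 : csp N w -> cco N (cco N w b2) b1 =
  if b1.2 == lact b2.1 b2.2 then tau b1.1 b2.1 b2.2 *: cco N w (b1.1 * b2.1, b2.2)%g else 0.
Proof. by move=> hw; rewrite (ccoass hN _ _ hw) DHsum. Qed.

Definition VN : comod K G :=
  Comod (camb N) (fun w => csp N w /\ cco N w (1%g, f) = w)
        (fun w g => if Gf lact f g then cco N w (g, f) else 0).

Lemma E_in w : csp N w -> csp VN (cco N w (1%g, f)).
Proof.
move=> hw; split; first exact: (ccoP hN).
by rewrite coassN //= l1 eqxx t1l scale1r mul1g.
Qed.

Lemma VN_comod : is_comod SG DG eGG VN.
Proof.
rewrite /is_comod /VN /=.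
split; first by split; [apply: (csp0 hN) | apply: (cco0 hN)].
split.
  move=> a v w [hv ev] [hw ew]; split; first exact: (cspL hN).
  by rewrite (ccoL hN) // ev ew.
split.
  move=> v g [hv ev]; case: ifP => hg; last by split; [apply: (csp0 hN) | apply: (cco0 hN)].
  split; first exact: (ccoP hN).
  by rewrite coassN //= (eqP hg) eqxx t1l scale1r mul1g.
split.
  move=> a v w g [hv _] [hw _]; case: ifP => _; last by rewrite scaler0 addr0.
  exact: (ccoL hN).
split; first by move=> v _; apply: finite_finset.
split; first by move=> v g _ /negbTE ->.
split.
  move=> v g1 g2 [hv ev]; rewrite (@fsum1 _ _ _ (g1 * g2)%g).
    rewrite /DGf mulgK eqxx andbT.
    have [hg2|hg2] := boolP (Gf lact f g2).
      have [hg1|hg1] := boolP (Gf lact f g1).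
        rewrite coassN //= (eqP hg2) eqxx.
        by rewrite GfE lM (eqP hg2) (eqP hg1) eqxx.
      have h12 : Gf lact f (g1 * g2)%g = false by rewrite GfE lM (eqP hg2); exact: negbTE hg1.
      by rewrite h12 scaler0.
    by rewrite (cco0 hN) scale0r; case: ifP.
  move=> b hb; rewrite /DGf; case: ifP => [/andP [_ /eqP E]|]; last by rewrite scale0r.
  by move: hb; rewrite E mulgKV eqxx.
move=> v [hv ev]; rewrite (@fsum1 _ _ _ 1%g) /eG ?eqxx ?scale1r ?Gf1 //.
by move=> n /negbTE ->; rewrite scale0r.
Qed.

Definition PhiN (w : camb N) : cot_amb F VN :=
  fun n => if lact n.1 n.2 == f then cco N w n else 0.

Definition PsiN (u : cot_amb F VN) : camb N :=
  \sum_(c <- ol) (tau (pk c)^-1%g (pk c) c)^-1 *: cco N (u (pk c, c)) ((pk c)^-1%g, f).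

Lemma PhiN_in w : csp N w -> cot_sp lact tau f (PhiN w).
Proof.
move=> hw; apply/(cot_spP VN_comod); split.
- apply: (sub_finite_set (B := [set n | cco N w n != 0])); last exact: (ccofin hN).
  by move=> n /=; rewrite /PhiN; case: ifP => //; rewrite eqxx.
- move=> n; rewrite /PhiN; case: ifP => hn; last by split; [apply: (csp0 hN) | apply: (cco0 hN)].
  split; first exact: (ccoP hN).
  by rewrite coassN //= eq_sym hn t1l scale1r mul1g -surjective_pairing.
- by move=> a c hne; rewrite /PhiN /= (negbTE hne).
- move=> h a c hh hac; rewrite /PhiN /= hac eqxx hh coassN //= hac eqxx.
  by rewrite lM hac (eqP hh) eqxx.
Qed.

Lemma PsiN_csp u : cot_sp lact tau f u -> csp N (PsiN u).
Proof.
move=> /(cot_spP VN_comod) [_ cs _ _]; apply: (csp_sum hN) => c.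
apply: (cspZ hN); apply: (ccoP hN); exact: (cs _).1.
Qed.

Lemma counitN w : csp N w -> \sum_(c <- ol) cco N w (1%g, c) = w.
Proof.
move=> hw; rewrite -{2}(ccounit hN hw).
rewrite -(fsbig_widen [set` [seq (1%g, c) | c <- ol]] setT) //.
- rewrite -fsbig_seq; last by rewrite map_inj_uniq ?ol_uniq // => x y [].
  by rewrite big_map; apply: eq_bigr => c _; rewrite /eH /= eqxx scale1r.
- move=> [p q] [_ /=] hn; rewrite /preimage /=.
  have [E|hp] := eqVneq p 1%g; last by rewrite /eH /= (negbTE hp) scale0r.
  rewrite (ccosupp hN) ?scaler0 // Cf_ol /=; apply: contra_notN hn => hq.
  by rewrite E; apply/mapP; exists q.
Qed.

Lemma PsiPhi w : csp N w -> PsiN (PhiN w) = w.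
Proof.
move=> hw; rewrite -{2}(counitN hw) /PsiN big_seq [RHS]big_seq; apply: eq_bigr => c hc.
rewrite /PhiN /= (pk_ol hc) eqxx coassN ?(ccoP hN) //= (pk_ol hc) eqxx.
by rewrite scalerA mulVf ?tnz // scale1r mulVg.
Qed.

Lemma PhiPsi u : cot_sp lact tau f u -> PhiN (PsiN u) = u.
Proof.
move=> hu; have /(cot_spP VN_comod) [_ cs Z R] := hu.
apply/funext => -[a q]; rewrite /PhiN /=.
have [haq|haq] := eqVneq (lact a q) f; last by rewrite Z.
have hq := ol_orb haq.
rewrite /PsiN (cco_sum hN); last by move=> c; apply: (cspZ hN); apply: (ccoP hN); exact: (cs _).1.
have csu : forall n, csp N (u n) by move=> n; exact: (cs n).1.
have ccoZ' : forall k n b b', cco N (k *: cco N (u n) b) b' = k *: cco N (cco N (u n) b) b'.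
  by move=> *; apply: (ccoZ hN); apply: (ccoP hN); apply: csu.
have coassN' : forall n b1 b2, cco N (cco N (u n) b2) b1 =
  if b1.2 == lact b2.1 b2.2 then tau b1.1 b2.1 b2.2 *: cco N (u n) (b1.1 * b2.1, b2.2)%g else 0.
  by move=> *; apply: coassN; apply: csu.
rewrite (bigD1_seq q hq ol_uniq) /= big1_seq ?addr0; last first.
  move=> c /andP [hcq hc]; rewrite ccoZ' coassN' /= (pkV hc).
  by rewrite eq_sym (negbTE hcq) scaler0.
rewrite ccoZ' coassN' /= (pkV hq) eqxx.
set y := pk q.
have hy : lact y q = f := pk_ol hq.
have hGf : Gf lact f (a * y^-1)%g by rewrite GfE lM (pkV hq) haq eqxx.
have := R (a * y^-1)%g y q hGf hy; rewrite /= hGf => ->.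
rewrite mulgKV !scalerA -[RHS]scale1r; congr (_ *: _).
rewrite mulrA -[X in _ * X * _]mul1r.
have E := tc a y^-1%g y q; rewrite hy mulVg t1r mul1r in E.
by rewrite mul1r -mulrA E mulVf.
Qed.

Lemma PhiN_hom : comod_hom (M := N) (N := cotensor lact tau f VN) PhiN.
Proof.
split; first by move=> w hw; exact (PhiN_in hw).
split.
  move=> a v w hv hw; apply/funext => n; rewrite addrfctE scalrfctE /PhiN /=.
  by case: ifP => _; [apply: (ccoL hN) | rewrite scaler0 addr0].
move=> w b hw; apply/funext => -[a c] /=; rewrite cot_co_pt /PhiN /=.
have [E|E] := eqVneq c (lact b.1 b.2).
  subst c; rewrite -lM coassN //= eqxx.
  by case: ifP => _; rewrite ?scaler0.
rewrite coassN //= (negbTE E).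
by case: ifP.
Qed.

Lemma TVN_iso : comod_iso (cotensor lact tau f VN) N.
Proof.
have hT := TV_comod VN_comod.
exists PsiN, PhiN; split.
- apply: (hom_inv hN PhiN_hom) => //.
  + by move=> u hu; apply: PsiN_csp.
  + by move=> w hw; apply: PsiPhi.
  + by move=> u hu; apply: PhiPsi.
- exact: PhiN_hom.
- by move=> u hu; apply: PhiPsi.
- by move=> w hw; apply: PsiPhi.
Qed.

End OneN.

Definition R (V : comod K G) (v : F -> camb V) : cot_amb F V :=
  fun n => if lact n.1 n.2 == f then
    (tau (n.1 * (pk n.2)^-1)%g (pk n.2) n.2)^-1 *: cco V (v n.2) (n.1 * (pk n.2)^-1)%g
  else 0.

Lemma Gf_ay a c : lact a c = f -> Gf lact f (a * (pk c)^-1)%g.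
Proof.
move=> hac; have hy := pkP hac.
by rewrite GfE lM -{1}hy lactK hac eqxx.
Qed.

Section OneV2.
Variable V : comod K G.
Hypothesis hV : is_comod SG DG eGG V.

Lemma R_in v : (forall c, csp V (v c)) -> cot_sp lact tau f (R v).
Proof.
move=> hv; apply/(cot_spP hV); split.
- apply: (sub_finite_set (B := [set (a, lact a^-1%g f) | a in [set: G]])); last first.
    exact: finite_image finite_finset.
  move=> [a c] /=; rewrite /R /=; case: ifP => [/eqP hac _|_ h]; last first.
    by move: h; rewrite eqxx.
  exists a => //.
  by rewrite -hac lactK.
- move=> n; rewrite /R; case: ifP => _; last exact: (csp0 hV).
  by apply: (cspZ hV); apply: (ccoP hV).
- by move=> a c hne; rewrite /R /= (negbTE hne).
- move=> h a c hh hac; rewrite /R /= hac eqxx lM hac (eqP hh) eqxx.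
  have hG := Gf_ay hac; set y := pk c; have hy : lact y c = f := pkP hac.
  rewrite (ccoZ hV _ _ (ccoP hV _ (hv c))) (coassV hV _ _ (hv c)) hG !scalerA mulgA; congr (_ *: _).
  have E := tc h (a * y^-1)%g y c; rewrite hy mulgKV mulgA in E.
  apply: (mulIf (tnz (h * a * y^-1)%g y c)).
  by rewrite mulfVK // -mulrA E (mulrC (tau h a c)) mulrA mulVf ?mul1r.
Qed.

Lemma R_rec (x : cot_amb F V) : cot_sp lact tau f x -> R (fun c => x (pk c, c)) = x.
Proof.
move=> hx; have /(cot_spP hV) [_ _ Z Rl] := hx.
apply/funext => -[a c]; rewrite /R /=.
case: eqP => [hac|hac]; last by rewrite Z //; apply/eqP.
rewrite Rl ?Gf_ay ?(pkP hac) // mulgKV scalerA mulVf ?scale1r //.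
Qed.

Lemma R_lin a (v w : F -> camb V) : (forall c, csp V (v c)) -> (forall c, csp V (w c)) ->
  R (fun c => a *: v c + w c) = a *: R v + R w.
Proof.
move=> hv hw; apply/funext => n; rewrite addrfctE scalrfctE /R /=.
case: ifP => _; last by rewrite scaler0 addr0.
by rewrite (ccoL hV) // scalerDr !scalerA mulrC.
Qed.

Definition Rc (c : F) (w : camb V) : cot_amb F V := R (fun c' => if c' == c then w else 0).

Lemma Rc_in c w : csp V w -> cot_sp lact tau f (Rc c w).
Proof. by move=> hw; apply: R_in => c'; case: ifP => _ //; apply: (csp0 hV). Qed.

Lemma Rc_lin c a v w : csp V v -> csp V w -> Rc c (a *: v + w) = a *: Rc c v + Rc c w.
Proof.
move=> hv hw; rewrite /Rc -R_lin; last by move=> c'; case: ifP => _ //; apply: (csp0 hV).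
  by congr R; apply/funext => c'; case: ifP => _ //; rewrite scaler0 addr0.
by move=> c'; case: ifP => _ //; apply: (csp0 hV).
Qed.

Lemma R_decomp (x : cot_amb F V) : cot_sp lact tau f x ->
  x = \sum_(c <- ol) Rc c (x (pk c, c)).
Proof.
move=> hx; have /(cot_spP hV) [_ cs Z _] := hx.
apply/funext => -[a q]; rewrite fct_sumE.
have [haq|haq] := eqVneq (lact a q) f; last first.
  rewrite Z // big1 // => c _; by rewrite /Rc /R /= (negbTE haq).
have hq := ol_orb haq.
rewrite (bigD1_seq q hq ol_uniq) /= big1_seq ?addr0; last first.
  move=> c /andP [hcq _]; rewrite /Rc /R /= haq eqxx [q == c]eq_sym (negbTE hcq).
  by rewrite (cco0 hV) scaler0.
have := congr1 (fun y => y (a, q)) (R_rec hx); rewrite /= => {1}<-.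
by rewrite /Rc /R /= haq eqxx eqxx.
Qed.

Lemma TV_fin : fin_dim V -> fin_dim (cotensor lact tau f V).
Proof.
move=> /spans_fin_dim [sV [hs1 hs2]].
apply: (@fin_dim_spans _ _ (cotensor lact tau f V) (flatten (map (fun c => map (Rc c) sV) ol))).
  apply: Pnth_flat => c; apply: (Pnth_map hs1) => w hw.
  exact (Rc_in c hw).
move=> x hx; rewrite (R_decomp hx); apply: spans_flat => c.
apply: (spans_lin (P := csp V)).
- exact: (csp0 hV).
- by move=> *; apply: (cspL hV).
- by move=> *; apply: Rc_lin.
- exact: hs1.
- apply: hs2; have /(cot_spP hV) [_ cs _ _] := hx; exact: cs.
Qed.

Lemma VTV_iso : comod_iso (VN (cotensor lact tau f V)) V.
Proof.
have hT := TV_comod hV.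
have hVT := VN_comod hT.
have hxv : comod_hom (M := V) (N := VN (cotensor lact tau f V)) (@xv V).
  split.
    move=> v hv; split; first exact (xv_in hV hv).
    by rewrite /= (cot_co_xv hV hv Gf1) (counitV hV hv).
  split; first by move=> a v w hv hw; apply: xv_lin.
  move=> v g hv /=; case: ifP => hg; first exact: cot_co_xv.
  by rewrite (ccosupp hV) ?hg // (xv0 hV).
have l : forall v, csp V v -> xv v (1%g, f) = v by move=> v hv; apply: xv1.
have r : forall x, csp (VN (cotensor lact tau f V)) x -> xv (x (1%g, f)) = x.
  move=> x [hx ex]; rewrite -(cot_co_col hV hx (l1 f)); exact: ex.
have hb : forall x, csp (VN (cotensor lact tau f V)) x -> csp V (x (1%g, f)).
  by move=> x [hx _]; have /(cot_spP hV) [_ cs _ _] := hx; apply: cs.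
exists (fun x => x (1%g, f)), (@xv V); split => //.
exact: (hom_inv hV hxv hb l r).
Qed.

End OneV2.

Lemma R_hom (V V' : comod K G) (phi : camb V -> camb V') (v : F -> camb V) :
  is_comod SG DG eGG V -> is_comod SG DG eGG V' -> comod_hom phi ->
  (forall c, csp V (v c)) ->
  cot_hom lact tau f phi (R v) = R (fun c => phi (v c)).
Proof.
move=> hV hV' hphi hv; apply/funext => n; rewrite /cot_hom /R.
case: ifP => _; last exact: (hom0 hV hphi).
by rewrite (homZ hV hphi _ (ccoP hV _ (hv _))) (hom_co hphi _ (hv _)).
Qed.

Lemma T_ses (M1 M M2 : comod K G) (i : camb M1 -> camb M) (p : camb M -> camb M2) :
  is_comod SG DG eGG M1 -> is_comod SG DG eGG M -> is_comod SG DG eGG M2 ->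
  short_exact i p -> short_exact (cot_hom lact tau f i) (cot_hom lact tau f p).
Proof.
move=> h1 h h2 [hi hp inj surj ex].
split.
- exact: cot_hom_hom.
- exact: cot_hom_hom.
- move=> x w hx hw E; apply/funext => n; apply: inj.
  + by case: hx => _ [+ _]; apply.
  + by case: hw => _ [+ _]; apply.
  + exact: (congr1 (fun y => y n) E).
- move=> y hy; have /(cot_spP h2) [_ cs _ _] := hy.
  have H : forall c, exists v, csp M v /\ p v = y (pk c, c).
    by move=> c; have [v hv1 hv2] := surj _ (cs (pk c, c)); exists v.
  have [v hv] := choice (P := fun c v => csp M v /\ p v = y (pk c, c)) H.
  exists (R v); first by exact (R_in h (fun c => (hv c).1)).
  rewrite (R_hom h h2 hp (fun c => (hv c).1)).
  rewrite -[RHS](R_rec h2 hy); congr R; apply/funext => c; exact: (hv c).2.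
- move=> x hx; have /(cot_spP h) [fx cx Zx Rx] := hx; split.
    move=> E.
    have H : forall n, exists w, csp M1 w /\ i w = x n.
      move=> n; have : p (x n) = 0 by exact: (congr1 (fun y => y n) E).
      by move/(ex _ (cx n)) => [w hw1 hw2]; exists w.
    have [w hw] := choice (P := fun n w => csp M1 w /\ i w = x n) H.
    have i0 := hom0 h1 hi.
    have wZ : forall n, x n = 0 -> w n = 0.
      move=> n hn; apply: inj; [exact: (hw n).1 | exact: (csp0 h1) | by rewrite (hw n).2 hn i0].
    exists w; last by apply/funext => n; rewrite /cot_hom (hw n).2.
    apply/(cot_spP h1); split.
    + apply: (sub_finite_set (B := [set n | x n != 0])) => // n /=.
      by apply: contraNN => /eqP /wZ ->.
    + by move=> n; exact: (hw n).1.
    + by move=> a c hne; apply: wZ; apply: Zx.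
    + move=> g a c hg hac; apply: inj.
      * by apply: (ccoP h1); exact: (hw _).1.
      * by apply: (cspZ h1); exact: (hw _).1.
      * by rewrite -(hom_co hi _ (hw (a, c)).1) (hw (a, c)).2 Rx // (homZ h1 hi _ (hw _).1) (hw _).2.
  move=> [w hw <-]; apply/funext => n; rewrite /cot_hom.
  have /(cot_spP h1) [_ cw _ _] := hw.
  by apply/(ex _ (hom_csp hi (cw n))); exists (w n).
Qed.

Lemma VN_hom (N N' : comod K (G * F)%type) (phi : camb N -> camb N') :
  is_comod SC DC eC N -> is_comod SC DC eC N' -> comod_hom phi ->
  comod_hom (M := VN N) (N := VN N') phi.
Proof.
move=> hN hN' hphi; split.
  move=> v [hv ev]; split; first exact: (hom_csp hphi).
  by rewrite (hom_co hphi) // ev.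
split; first by move=> a v w [hv _] [hw _]; apply: (hom_lin hphi).
move=> v g [hv _] /=; case: ifP => _; first exact: (hom_co hphi).
by rewrite (hom0 hN hphi).
Qed.

Lemma VN_ses (M1 M M2 : comod K (G * F)%type) (i : camb M1 -> camb M) (p : camb M -> camb M2) :
  is_comod SC DC eC M1 -> is_comod SC DC eC M -> is_comod SC DC eC M2 ->
  short_exact i p -> short_exact (M1 := VN M1) (M := VN M) (M2 := VN M2) i p.
Proof.
move=> h1 h h2 [hi hp inj surj ex]; split.
- exact: VN_hom.
- exact: VN_hom.
- by move=> v w [hv _] [hw _]; apply: inj.
- move=> u [hu eu]; have [v hv pv] := surj u hu.
  exists (cco M v (1%g, f)); first exact: (E_in h).
  by rewrite -(hom_co hp) // pv eu.
- move=> v [hv ev]; split.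
    move/(ex _ hv) => [w' hw' iw']; exists (cco M1 w' (1%g, f)); first exact: (E_in h1).
    by rewrite -(hom_co hi) // iw' ev.
  by move=> [w [hw _] iw]; apply/(ex _ hv); exists w.
Qed.

Lemma VN_fd (N : comod K (G * F)%type) : fd_comod SC DC eC N -> fd_comod SG DG eGG (VN N).
Proof.
move=> [hN /spans_fin_dim [sN [hs1 hs2]]]; split; first exact: VN_comod.
apply: (@fin_dim_spans _ _ (VN N) (map (fun w => cco N w (1%g, f)) sN)).
  by apply: (Pnth_map hs1) => w hw; apply: (E_in hN).
move=> v [hv ev]; rewrite -ev.
apply: (spans_lin (P := csp N)).
- exact: (csp0 hN).
- by move=> *; apply: (cspL hN).
- by move=> *; apply: (ccoL hN).
- exact: hs1.
- exact: hs2.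
Qed.

Lemma TV_fd (V : comod K G) : fd_comod SG DG eGG V -> fd_comod SC DC eC (cotensor lact tau f V).
Proof. by move=> [hV fV]; split; [apply: TV_comod | apply: TV_fin]. Qed.

Lemma main_conc :
  let SG := Gf lact f in
  let DG := DGf lact tau f in
  let eG := @eG K G in
  let SC := Cf lact f in
  let DC := DH lact tau in
  let eC := @eH K F G in
  let T := cotensor lact tau f in
  (forall V : comod K G, is_comod SG DG eG V -> is_comod SC DC eC (T V)) /\
  (forall (V V' : comod K G) (phi : camb V -> camb V'),
      is_comod SG DG eG V -> is_comod SG DG eG V' -> comod_hom phi ->
      comod_hom (cot_hom lact tau f phi)) /\
  (forall (V V' : comod K G) (phi psi : camb V -> camb V'),
      is_comod SG DG eG V -> is_comod SG DG eG V' -> comod_hom phi -> comod_hom psi ->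
      hom_eq (cot_hom lact tau f phi) (cot_hom lact tau f psi) -> hom_eq phi psi) /\
  (forall (V V' : comod K G) (chi : camb (T V) -> camb (T V')),
      is_comod SG DG eG V -> is_comod SG DG eG V' -> comod_hom chi ->
      exists phi : camb V -> camb V',
        comod_hom phi /\ hom_eq chi (cot_hom lact tau f phi)) /\
  (forall N : comod K (G * F)%type, is_comod SC DC eC N ->
      exists V : comod K G, is_comod SG DG eG V /\ comod_iso (T V) N) /\
  (forall V : comod K G, fd_comod SG DG eG V -> fin_dim (T V)) /\
  (forall s t : fsum K G, valid_fsum SG DG eG s -> valid_fsum SG DG eG t ->
      (gr_eq SG DG eG s t <-> gr_eq SC DC eC (cot_fsum lact tau f s) (cot_fsum lact tau f t))) /\
  (forall t : fsum K (G * F)%type, valid_fsum SC DC eC t ->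
      exists2 s : fsum K G, valid_fsum SG DG eG s & gr_eq SC DC eC (cot_fsum lact tau f s) t).
Proof using l1 lM t1l t1r tc tnz.
move=> SG0 DG0 eG0 SC0 DC0 eC0 T0.
rewrite /SG0 /DG0 /eG0 /SC0 /DC0 /eC0 /T0 {SG0 DG0 eG0 SC0 DC0 eC0 T0}.
split; first by move=> V hV; apply: TV_comod.
split; first by move=> V V' phi hV hV' hphi; apply: cot_hom_hom.
split; first by move=> V V' phi psi hV hV' hphi hpsi; apply: cot_faithful.
split; first by move=> V V' chi hV hV' hchi; apply: cot_full.
split; first by move=> N hN; exists (VN N); split; [apply: VN_comod | apply: TVN_iso].
split; first by move=> V [hV fV]; apply: TV_fin.
have hsesT : forall (M1 M M2 : comod K G) (i : camb M1 -> camb M) (p : camb M -> camb M2),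
     fd_comod SG DG eGG M1 -> fd_comod SG DG eGG M -> fd_comod SG DG eGG M2 ->
     short_exact i p ->
     exists (i' : camb (cotensor lact tau f M1) -> camb (cotensor lact tau f M))
            (p' : camb (cotensor lact tau f M) -> camb (cotensor lact tau f M2)),
       short_exact i' p'.
  move=> M1 M M2 i p f1 fM f2 hs.
  by exists (cot_hom lact tau f i), (cot_hom lact tau f p); apply: T_ses; [case: f1|case: fM|case: f2|].
have hsesV : forall (M1 M M2 : comod K (G * F)%type) (i : camb M1 -> camb M) (p : camb M -> camb M2),
     fd_comod SC DC eC M1 -> fd_comod SC DC eC M -> fd_comod SC DC eC M2 ->
     short_exact i p ->
     exists (i' : camb (VN M1) -> camb (VN M)) (p' : camb (VN M) -> camb (VN M2)),
       short_exact i' p'.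
  move=> M1 M M2 i p f1 fM f2 hs.
  by exists i, p; apply: VN_ses; [case: f1|case: fM|case: f2|].
split.
  move=> s t vs vt; split.
    move=> H; rewrite /cot_fsum.
    exact: (gr_transport (g := cotensor lact tau f) (@TV_fd) hsesT H).
  rewrite /cot_fsum => H.
  have H1 := gr_transport (g := VN) (@VN_fd) hsesV H.
  rewrite -!map_comp in H1.
  have hiso : forall M, fd_comod SG DG eGG M ->
      fd_comod SG DG eGG (VN (cotensor lact tau f M)) /\ comod_iso (VN (cotensor lact tau f M)) M.
    by move=> M hM; split; [apply: VN_fd; apply: TV_fd | apply: VTV_iso; case: hM].
  have Es := gr_map_iso hiso vs; have Et := gr_map_iso hiso vt.
  exact: gr_trans (gr_sym Es) (gr_trans H1 Et).
move=> t vt; exists (map (fun p => (p.1, VN p.2)) t).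
  elim: t vt => [|[a N] t IH] //= [hN ht]; split; [exact: VN_fd | exact: IH].
rewrite /cot_fsum -map_comp.
have hiso : forall N, fd_comod SC DC eC N ->
    fd_comod SC DC eC (cotensor lact tau f (VN N)) /\ comod_iso (cotensor lact tau f (VN N)) N.
  by move=> N hN; split; [apply: TV_fd; apply: VN_fd | apply: TVN_iso; case: hN].
exact: (gr_map_iso hiso vt).
Qed.

End Conc.


Close Scope classical_set_scope.
Close Scope ring_scope.
Unset Implicit Arguments.

Theorem corollary4p4
  (K : closedFieldType) (hK : [pchar K]%R =i pred0)
  (F : groupType) (G : finGroupType)
  (lact : G -> F -> F) (ract : G -> F -> G)
  (hmp : is_matched_pair lact ract)
  (sigma : G -> F -> F -> K) (tau : G -> G -> F -> K)
  (hst : sigma_tau_conditions lact ract sigma tau)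
  (f : F) :
  let SG := Gf lact f in
  let DG := DGf lact tau f in
  let eG := @eG K G in
  let SC := Cf lact f in
  let DC := DH lact tau in
  let eC := @eH K F G in
  let T := cotensor lact tau f in
  (* V |-> ~V is a functor from right k^{G_f}_{tau_f}-comodules to right C_f-comodules *)
  (forall V : comod K G, is_comod SG DG eG V -> is_comod SC DC eC (T V)) /\
  (forall (V V' : comod K G) (phi : camb V -> camb V'),
      is_comod SG DG eG V -> is_comod SG DG eG V' -> comod_hom phi ->
      comod_hom (cot_hom lact tau f phi)) /\
  (* faithful *)
  (forall (V V' : comod K G) (phi psi : camb V -> camb V'),
      is_comod SG DG eG V -> is_comod SG DG eG V' -> comod_hom phi -> comod_hom psi ->
      hom_eq (cot_hom lact tau f phi) (cot_hom lact tau f psi) -> hom_eq phi psi) /\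
  (* full *)
  (forall (V V' : comod K G) (chi : camb (T V) -> camb (T V')),
      is_comod SG DG eG V -> is_comod SG DG eG V' -> comod_hom chi ->
      exists phi : camb V -> camb V',
        comod_hom phi /\ hom_eq chi (cot_hom lact tau f phi)) /\
  (* essentially surjective *)
  (forall N : comod K (G * F)%type, is_comod SC DC eC N ->
      exists V : comod K G, is_comod SG DG eG V /\ comod_iso (T V) N) /\
  (* the induced map [V] |-> [~V] on Grothendieck groups of finite-dimensional
     comodules is well defined and an isomorphism *)
  (forall V : comod K G, fd_comod SG DG eG V -> fin_dim (T V)) /\
  (forall s t : fsum K G, valid_fsum SG DG eG s -> valid_fsum SG DG eG t ->
      (gr_eq SG DG eG s t <-> gr_eq SC DC eC (cot_fsum lact tau f s) (cot_fsum lact tau f t))) /\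
  (forall t : fsum K (G * F)%type, valid_fsum SC DC eC t ->
      exists2 s : fsum K G, valid_fsum SG DG eG s & gr_eq SC DC eC (cot_fsum lact tau f s) t).
Proof.
case: hmp => l1 [lM _].
case: hst => _ [tnz [_ [_ [_ [ht1 [_ [tc _]]]]]]].
have H := main_conc f l1 lM (fun g x => (ht1 g x).1) (fun g x => (ht1 g x).2) tc tnz.
exact H.
Qed.
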